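(* Let $(X,\mathsf{d}_X)$ be a compact metric space, $\mathfrak{A}$ a finite-dimensional C*-algebra, and $\mu$ a state of $C(X,\mathfrak{A})$. Let $\|\cdot\|_{\mathsf{n}}$ and $\|\cdot\|_{\mathsf{m}}$ be norms on $\mathfrak{A}$ (over $\mathbb{R}$ or $\mathbb{C}$) and $q,p\in\{C(X),\mathbb{C},\mu\}$. Then the seminorms $\mathsf{L}^{(\mathsf{n}),q}_{\mathsf{d}_X}$ and $\mathsf{L}^{(\mathsf{m}),p}_{\mathsf{d}_X}$ are equivalent on the self-adjoint part of $C(X,\mathfrak{A})$, i.e. there exist $c,C>0$ with $c\,\mathsf{L}^{(\mathsf{n}),q}_{\mathsf{d}_X}(a)\le\mathsf{L}^{(\mathsf{m}),p}_{\mathsf{d}_X}(a)\le C\,\mathsf{L}^{(\mathsf{n}),q}_{\mathsf{d}_X}(a)$ for all self-adjoint $a$. Furthermore, the map $\mathfrak{c}_X:C(X)\to C(X,\mathbb{C}1_{\mathfrak{A}})$, $\mathfrak{c}_X(f)(x)=f(x)1_{\mathfrak{A}}$, is bi-Lipschitz with respect to $\mathsf{L}_{\mathsf{d}_X}$ and any $\mathsf{L}^{(\mathsf{n}),q}_{\mathsf{d}_X}$: there exist $c',C'>0$ with $c'\mathsf{L}_{\mathsf{d}_X}(f)\le\mathsf{L}^{(\mathsf{n}),q}_{\mathsf{d}_X}(\mathfrak{c}_X(f))\le C'\mathsf{L}_{\mathsf{d}_X}(f)$ for all real-valued $f\in C(X)$.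
   Context: $C(X,\mathfrak{A})$: continuous $\mathfrak{A}$-valued functions, pointwise operations, supremum norm; $C(X,\mathbb{C}1_{\mathfrak{A}})$ the $\mathbb{C}1_{\mathfrak{A}}$-valued ones. For a norm $\|\cdot\|_{\mathsf{n}}$ on $\mathfrak{A}$: $l^{(\mathsf{n})}_{\mathsf{d}_X}(a)=\sup_{x\ne y}\|a(x)-a(y)\|_{\mathsf{n}}/\mathsf{d}_X(x,y)$; $\mathsf{L}^{(\mathsf{n}),C(X)}_{\mathsf{d}_X}(a)=\max\{l^{(\mathsf{n})}_{\mathsf{d}_X}(a),\inf_{b\in C(X,\mathbb{C}1_{\mathfrak{A}})}\|a-b\|\}$, $\mathsf{L}^{(\mathsf{n}),\mathbb{C}}_{\mathsf{d}_X}(a)=\max\{l^{(\mathsf{n})}_{\mathsf{d}_X}(a),\inf_{\lambda\in\mathbb{C}}\|a-\lambda1\|\}$, $\mathsf{L}^{(\mathsf{n}),\mu}_{\mathsf{d}_X}(a)=\max\{l^{(\mathsf{n})}_{\mathsf{d}_X}(a),\|a-\mu(a)1\|\}$ (supremum norms). $\mathsf{L}_{\mathsf{d}_X}(f)=\sup_{x\ne y}|f(x)-f(y)|/\mathsf{d}_X(x,y)$. *)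

(* Defs.v *)
From Stdlib Require List.
From HB Require Import structures.
From mathcomp Require Import all_boot all_order all_algebra all_field.
From mathcomp Require Import all_classical all_reals.
From mathcomp Require Import constructive_ereal ereal.
From mathcomp.real_closed Require Import complex.

Set Implicit Arguments.
Unset Strict Implicit.
Unset Printing Implicit Defensive.
Import Order.TTheory GRing.Theory Num.Theory.
Local Open Scope ring_scope.
Local Open Scope classical_set_scope.

Section Defs.
Variable R : realType.
Local Notation C := (R[i]).

Record is_metric (X : Type) (d : X -> X -> R) : Prop := {
  metric_ge0 : forall x y, 0 <= d x y;
  metric_eq0 : forall x y, d x y = 0 <-> x = y;
  metric_sym : forall x y, d x y = d y x;
  metric_triangle : forall x y z, d x z <= d x y + d y z }.

Definition d_open (X : Type) (d : X -> X -> R) (U : X -> Prop) :=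
  forall x, U x -> exists2 r : R, 0 < r & forall y, d x y < r -> U y.

Definition d_compact (X : Type) (d : X -> X -> R) :=
  forall (I : Type) (U : I -> X -> Prop),
    (forall i, d_open d (U i)) -> (forall x, exists i, U i x) ->
    exists s : list I, forall x, exists i, List.In i s /\ U i x.

Definition compact_metric_space (X : Type) (d : X -> X -> R) :=
  is_metric d /\ d_compact d.

(* A : falgType C is a finite-dimensional unital C-algebra; star is the
   involution and cn the C*-norm (completeness is automatic in finite dim). *)
Record is_cstar (A : falgType C) (star : A -> A) (cn : A -> R) : Prop := {
  star_add : forall a b, star (a + b) = star a + star b;
  star_scale : forall (z : C) a, star (z *: a) = conjc z *: star a;
  star_mul : forall a b, star (a * b) = star b * star a;
  star_invol : forall a, star (star a) = a;
  cn_eq0 : forall a, cn a = 0 -> a = 0;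
  cn_triangle : forall a b, cn (a + b) <= cn a + cn b;
  cn_scale : forall (z : C) a, (cn (z *: a))%:C%C = `|z| * (cn a)%:C%C;
  cn_submul : forall a b, cn (a * b) <= cn a * cn b;
  cn_cstar : forall a, cn (star a * a) = cn a ^+ 2 }.

(* a norm on A regarded as a real vector space (this includes the norms on A
   as a complex vector space) *)
Record is_real_norm (A : falgType C) (N : A -> R) : Prop := {
  rnorm_eq0 : forall a, N a = 0 -> a = 0;
  rnorm_triangle : forall a b, N (a + b) <= N a + N b;
  rnorm_scale : forall (r : R) a, N (r%:C%C *: a) = `|r| * N a }.

Variables (X : Type) (d : X -> X -> R) (A : falgType C)
  (star : A -> A) (cn : A -> R).

Definition cont_XA (a : X -> A) :=
  forall x (eps : R), 0 < eps ->
    exists2 del : R, 0 < del & forall y, d x y < del -> cn (a y - a x) < eps.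

Definition cont_XR (f : X -> R) :=
  forall x (eps : R), 0 < eps ->
    exists2 del : R, 0 < del & forall y, d x y < del -> `|f y - f x| < eps.

Definition self_adjoint_XA (a : X -> A) := cont_XA a /\ forall x, star (a x) = a x.

Definition scalar_XA (b : X -> A) :=
  cont_XA b /\ forall x, exists z : C, b x = z *: 1.

Definition cX (f : X -> R) : X -> A := fun x => (f x)%:C%C *: 1.

(* supremum norm of C(X,A) (the sup of the empty family being 0) *)
Definition supnorm (a : X -> A) : \bar R :=
  ereal_sup ([set 0%E] `|` [set (cn (a x))%:E | x in [set: X]]).

Definition is_state (mu : (X -> A) -> C) :=
  [/\ forall a b, cont_XA a -> cont_XA b -> mu (fun x => a x + b x) = mu a + mu b,
      forall (z : C) a, cont_XA a -> mu (fun x => z *: a x) = z * mu a,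
      forall a, cont_XA a -> 0 <= mu (fun x => star (a x) * a x)
    & mu (fun _ => 1) = 1].

Definition lipA (N : A -> R) (a : X -> A) : \bar R :=
  ereal_sup ([set 0%E] `|`
    [set (N (a xy.1 - a xy.2) / d xy.1 xy.2)%:E | xy in [set xy : X * X | xy.1 <> xy.2]]).

Definition lipR (f : X -> R) : \bar R :=
  ereal_sup ([set 0%E] `|`
    [set (`|f xy.1 - f xy.2| / d xy.1 xy.2)%:E | xy in [set xy : X * X | xy.1 <> xy.2]]).

Inductive qchoice := q_CX | q_C | q_mu.

Definition Lq (N : A -> R) (mu : (X -> A) -> C) (q : qchoice) (a : X -> A)
  : \bar R :=
  let dev := match q with
    | q_CX => ereal_inf [set supnorm (fun x => a x - b x) | b in scalar_XA]
    | q_C => ereal_inf [set supnorm (fun x => a x - lam *: 1) | lam in [set: C]]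
    | q_mu => supnorm (fun x => a x - mu a *: 1)
    end in
  Order.max (lipA N a) dev.
End Defs.

(* Main.v *)
Require Import Defs.
From Stdlib Require List.
From mathcomp Require Import all_boot all_order all_algebra all_field.
From mathcomp Require Import all_classical all_reals.
From mathcomp Require Import constructive_ereal ereal.
From mathcomp.real_closed Require Import complex.
From mathcomp Require Import topology normedtype matrix_normedtype derive.
From mathcomp Require Import ring lra.
Import Order.TTheory GRing.Theory Num.Theory.
Import numFieldTopology.Exports numFieldNormedType.Exports.
Set Implicit Arguments.
Unset Strict Implicit.
Unset Printing Implicit Defensive.
Local Open Scope ring_scope.

Module M_NE.
Local Open Scope classical_set_scope.
Lemma lip_arith (R : realFieldType) (K e a dd : R) : 0 <= K -> 0 < e ->
  `|a| <= K * dd -> dd < e / (K + 1) -> `|a| < e.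
Proof.
move=> K0 e0 h1 h2.
have K1 : 0 < K + 1 by rewrite ltr_wpDl.
have et : e = (e / (K + 1)) * (K + 1) by rewrite mulfVK // gt_eqF.
move: (e / (K + 1)) h2 et => t h2 et.
have h3 : K * dd <= K * t by apply: ler_wpM2l => //; apply: ltW.
have : 0 <= `|a| by [].
nra.
Qed.

Lemma NE_core (R : realType) m (F : 'rV[R]_m -> R) (K : R) : 0 <= K ->
  (forall u v, F u - F v <= K * `|u - v|) ->
  (forall u, 0 <= F u) ->
  (forall u, F u = 0 -> u = 0) ->
  (forall r u, F (r *: u) = `|r| * F u) ->
  exists2 k, 0 < k & forall u, `|u| <= k * F u.
Proof.
move=> K0 HL Fge0 H0 HZ.
case: (pselect (exists u : 'rV[R]_m, u != 0)); last first.
  move=> nu; exists 1 => // u.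
  have -> : u = 0 by apply: contra_notP nu => /eqP nu; exists u.
  by rewrite normr0 mul1r.
move=> [u0 u0n0].
set S := [set u : 'rV[R]_m | `|u| = 1].
have S0 : S !=set0.
  exists (`|u0|^-1 *: u0); rewrite /S /= normrZ normrV ?unitfE ?normr_eq0 //.
  by rewrite normr_id mulVf // normr_eq0.
have Scl : closed S.
  apply: (@preimage_closed _ R (fun u : 'rV[R]_m => `|u|) [set x | x = 1]); last exact: closed_eq.
  by move=> x _; apply: norm_continuous.
have Sb : bounded_set S.
  rewrite /= /bounded_near; near=> M => x /= ->.
  by near: M; apply: nbhs_pinfty_ge; rewrite num_real.
have Sc : compact S by apply: bounded_closed_compact.
have Fc : continuous F.
  move=> x; have [_] := @cvgrPdist_lt R R^o _ (nbhs x) _ F (F x); apply => e e0.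
  have e1 : 0 < e / (K + 1) by rewrite divr_gt0 // ltr_wpDl.
  near=> y.
  have : `|x - y| < e / (K + 1) by near: y; have := @cvgr_dist_lt R 'rV[R]_m _ (nbhs x) _ id x; apply => //; exact: cvg_id.
  move=> hxy; have := @lip_arith R K e (F x - F y) (`|x - y|) K0 e0; apply => //.
  have h1 := HL x y; have h2 := HL y x; rewrite distrC in h2.
  by rewrite ler_norml; apply/andP; split => //; rewrite lerNl opprB.
have [c cS cmin] := EVT_min_rV S0 Sc (continuous_subspaceT Fc).
have cS' : `|c| = 1 by move: cS; rewrite inE.
have Fc0 : 0 < F c.
  rewrite lt0r Fge0 andbT; apply/eqP => /H0 c0.
  by move: cS'; rewrite c0 normr0 => /eqP; rewrite eq_sym oner_eq0.
exists (F c)^-1; first by rewrite invr_gt0.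
move=> u; have [->|un0] := eqVneq u 0; first by rewrite normr0 mulr_ge0 ?Fge0 // invr_ge0 ltW.
have nu0 : 0 < `|u| by rewrite normr_gt0.
have vS : (`|u|^-1 *: u) \in S.
  rewrite inE /S /= normrZ normrV ?unitfE ?normr_eq0 //.
  by rewrite normr_id mulVf // normr_eq0.
have := cmin _ vS; rewrite HZ normrV ?unitfE ?normr_eq0 // normr_id.
move=> h.
have h' : F c * `|u| <= F u.
  have := ler_wpM2r (ltW nu0) h; rewrite mulrAC mulVf ?gt_eqF // mul1r.
  by [].
rewrite ler_pdivlMl //; by rewrite mulrC.
Unshelve. all: end_near.
Qed.

End M_NE.
Import M_NE.

Module M_P2.
Section RealNorm.
Variables (R : realType) (A : falgType R[i]) (N : A -> R).
Hypothesis HN : is_real_norm N.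

Lemma rn0 : N 0 = 0.
Proof. by rewrite -(scale0r 0) -(rmorph0 (real_complex R)) (rnorm_scale HN) normr0 mul0r. Qed.

Lemma rnN a : N (- a) = N a.
Proof.
by rewrite -scaleN1r -(rmorphN1 (real_complex R)) (rnorm_scale HN) normrN normr1 mul1r.
Qed.

Lemma rn_ge0 a : 0 <= N a.
Proof.
have := rnorm_triangle HN a (- a); rewrite subrr rn0 rnN => h.
by rewrite -(@pmulr_rge0 _ 2) // mulr2n mulrDl mul1r.
Qed.

Lemma rn_sub a b : N a - N b <= N (a - b).
Proof.
have := rnorm_triangle HN (a - b) b; rewrite subrK; lra.
Qed.

Lemma rnB a b : N (a - b) = N (b - a).
Proof. by rewrite -rnN opprB. Qed.

Lemma rnZ (r : R) a : N (r%:C%C *: a) = `|r| * N a.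
Proof. exact: rnorm_scale. Qed.
End RealNorm.


Section Basis.
Variables (R : realType) (A : falgType R[i]).
Local Notation n := (\dim (@fullv _ A)).
Local Notation eb := (vbasis (@fullv _ A)).
Definition fb (j : 'I_(n + n)) : A :=
  match fintype.split j with inl i => eb`_i | inr i => 'i%C *: eb`_i end.
Definition psi (u : 'rV[R]_(n + n)) : A := \sum_j (u 0 j)%:C%C *: fb j.
Definition rco (v : A) : 'rV[R]_(n + n) :=
  \row_j (match fintype.split j with
         | inl i => complex.Re (coord eb i v)
         | inr i => complex.Im (coord eb i v) end).

Lemma split_l (i : 'I_n) : fintype.split (lshift n i) = inl i.
Proof. exact: (unsplitK (inl i)). Qed.
Lemma split_r (i : 'I_n) : fintype.split (rshift n i) = inr i.
Proof. exact: (unsplitK (inr i)). Qed.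

Lemma psi_split u : psi u =
  \sum_(i < n) ((u 0 (lshift n i))%:C%C + 'i%C * (u 0 (rshift n i))%:C%C) *: eb`_i.
Proof.
rewrite /psi big_split_ord /= -big_split /=; apply: eq_bigr => i _.
by rewrite /fb split_l split_r scalerA scalerDl mulrC.
Qed.

Lemma cplx_eq (z : R[i]) : (complex.Re z)%:C%C + 'i%C * (complex.Im z)%:C%C = z.
Proof. by case: z => a b; apply/eqP; rewrite eq_complex /=; simpc. Qed.

Lemma psi_rco v : psi (rco v) = v.
Proof.
rewrite psi_split [RHS](coord_vbasis (memvf v)); apply: eq_bigr => i _.
by rewrite !mxE split_l split_r cplx_eq.
Qed.

Lemma psiB u w : psi (u - w) = psi u - psi w.
Proof.
rewrite /psi -sumrB; apply: eq_bigr => j _.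
by rewrite !mxE rmorphB scalerBl.
Qed.

Lemma psiZ (r : R) u : psi (r *: u) = r%:C%C *: psi u.
Proof.
rewrite /psi scaler_sumr; apply: eq_bigr => j _.
by rewrite !mxE rmorphM scalerA.
Qed.

Lemma psi_inj0 u : psi u = 0 -> u = 0.
Proof.
rewrite psi_split => h.
have fr := basis_free (vbasisP (@fullv _ A)).
have hc i : (u 0 (lshift n i))%:C%C + 'i%C * (u 0 (rshift n i))%:C%C = 0.
  have := coord_sum_free (fun i => (u 0 (lshift n i))%:C%C + 'i%C * (u 0 (rshift n i))%:C%C) i fr.
  by rewrite h linear0.
apply/matrixP => a j; rewrite (ord1 a) mxE.
have hc' i : u 0 (lshift n i) = 0 /\ u 0 (rshift n i) = 0.
  move: (hc i); move: (u 0 (lshift n i)) (u 0 (rshift n i)) => x y.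
  by move/eqP; rewrite eq_complex /=; simpc; case/andP => /eqP -> /eqP ->.
rewrite -(splitK j); case: (fintype.split j) => k /=.
  by case: (hc' k).
by case: (hc' k).
Qed.

Lemma rcoB v w : rco (v - w) = rco v - rco w.
Proof.
apply/matrixP => a j; rewrite !mxE; case: (fintype.split j) => i; rewrite linearB /=.
  by case: (coord eb i v) => ? ?; case: (coord eb i w) => ? ?.
by case: (coord eb i v) => ? ?; case: (coord eb i w) => ? ?.
Qed.

Lemma mx_coord_le (u : 'rV[R]_(n + n)) j : `|u 0 j| <= `|u|.
Proof.
have -> : `|u| = mx_norm u by []. rewrite mx_normrE; apply/bigmax_geP; right => /=.
by exists (0, j).
Qed.
End Basis.

Section NormEquiv.
Variables (R : realType) (A : falgType R[i]).
Local Notation n := (\dim (@fullv _ A)).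

Lemma rn_sum (N : A -> R) (HN : is_real_norm N) (I : Type) (s : seq I) (F : I -> A) :
  N (\sum_(i <- s) F i) <= \sum_(i <- s) N (F i).
Proof.
elim/big_rec2 : _ => [|i y1 y2 _ h]; first by rewrite (rn0 HN).
by apply: le_trans (rnorm_triangle HN _ _) _; rewrite lerD2l.
Qed.

Lemma psi_lip (N : A -> R) (HN : is_real_norm N) (u : 'rV[R]_(n + n)) :
  N (psi u) <= (\sum_j N (fb j)) * `|u|.
Proof.
apply: le_trans (rn_sum HN _ _) _; rewrite mulr_suml; apply: ler_sum => j _.
rewrite (rnZ HN) mulrC; apply: ler_wpM2l; first exact: rn_ge0.
exact: mx_coord_le.
Qed.

Lemma NE_psi (N : A -> R) (HN : is_real_norm N) :
  exists2 k, 0 < k & forall u : 'rV[R]_(n + n), `|u| <= k * N (psi u).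
Proof.
apply: (@NE_core R (n + n) (fun u => N (psi u)) (\sum_j N (fb j))).
- by apply: sumr_ge0 => j _; apply: rn_ge0.
- move=> u v; apply: le_trans (rn_sub HN _ _) _; rewrite -psiB; exact: psi_lip.
- by move=> u; apply: rn_ge0.
- by move=> u /(rnorm_eq0 HN) /psi_inj0.
- by move=> r u; rewrite psiZ rnZ.
Qed.

Lemma NE_rco (N : A -> R) (HN : is_real_norm N) :
  exists2 k, 0 < k & forall v j, `|rco v 0 j| <= k * N v.
Proof.
have [k k0 hk] := NE_psi HN; exists k => // v j.
by apply: le_trans (mx_coord_le _ _) _; rewrite -{2}(psi_rco v).
Qed.

Lemma NE_equiv (N1 N2 : A -> R) : is_real_norm N1 -> is_real_norm N2 ->
  exists2 K, 0 < K & forall v, N1 v <= K * N2 v.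
Proof.
move=> H1 H2; have [k k0 hk] := NE_psi H2.
set S := \sum_j N1 (fb j).
have S0 : 0 <= S by apply: sumr_ge0 => j _; apply: rn_ge0.
exists (S * k + 1); first by rewrite ltr_wpDl // mulr_ge0 // ltW.
move=> v; rewrite -{1}(psi_rco v); apply: le_trans (psi_lip H1 _) _.
apply: (@le_trans _ _ (S * (k * N2 v))); first by apply: ler_wpM2l => //; rewrite -{2}(psi_rco v).
rewrite mulrA mulrDl mul1r lerDl; exact: rn_ge0.
Qed.
End NormEquiv.

End M_P2.
Import M_P2.

Module M_P3.
Lemma normc_real (R : realType) (r : R) : `|r%:C%C| = `|r|%:C%C.
Proof. by rewrite normc_def /= expr0n /= addr0 sqrtr_sqr. Qed.

Section Space.
Variables (R : realType) (X : Type) (d : X -> X -> R).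
Hypothesis Hd : is_metric d.
Hypothesis Hc : d_compact d.

Lemma d_ge0 x y : 0 <= d x y. Proof. exact: (Defs.metric_ge0 Hd). Qed.
Lemma dxx x : d x x = 0. Proof. by apply/(Defs.metric_eq0 Hd). Qed.
Lemma d_pos x y : x <> y -> 0 < d x y.
Proof. by move=> xy; rewrite lt0r d_ge0 andbT; apply/eqP => /(Defs.metric_eq0 Hd). Qed.

Lemma list_bound (s : list nat) k : List.In k s -> (k <= List.fold_right maxn 0 s)%N.
Proof.
elim: s => //= a s IH [->|/IH h]; first by rewrite leq_maxl.
by apply: leq_trans h _; rewrite leq_maxr.
Qed.

Lemma usc_bounded (h : X -> R) :
  (forall x (k : R), h x < k -> exists2 r : R, 0 < r & forall y, d x y < r -> h y < k) ->
  exists M : R, forall x, h x <= M.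
Proof.
move=> hu.
have [s hs] : exists s : list nat, forall x, exists i, List.In i s /\ h x < i%:R.
  apply: Hc; first by move=> k x /hu [r r0 hr]; exists r.
  move=> x; exists (Num.Def.archi_bound `|h x|).
  by apply: le_lt_trans (archi_boundP (normr_ge0 _)); exact: ler_norm.
exists (List.fold_right maxn 0 s)%:R => x.
have [k [ks hk]] := hs x; apply/ltW/(lt_le_trans hk).
by rewrite ler_nat; apply: list_bound.
Qed.

Lemma diam_bound : exists2 D : R, 0 <= D & forall x y, d x y <= D.
Proof.
case: (pselect (exists x : X, True)) => [[x0 _]|nx]; last first.
  by exists 0 => // x; exfalso; apply: nx; exists x.
have [M hM] : exists M : R, forall x, d x0 x <= M.
  apply: usc_bounded => x k hk; exists (k - d x0 x); first by rewrite subr_gt0.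
  move=> y hy; have := Defs.metric_triangle Hd x0 x y; lra.
exists (M + M); first by have := hM x0; rewrite dxx; lra.
move=> x y; have := Defs.metric_triangle Hd x x0 y; rewrite (Defs.metric_sym Hd x x0).
by have := hM x; have := hM y; lra.
Qed.
End Space.

End M_P3.
Import M_P3.

Module M_P4.
Lemma sqrt_diff (R : realType) (a b : R) : 0 <= a -> 0 <= b ->
  `|Num.sqrt a - Num.sqrt b| <= Num.sqrt `|a - b|.
Proof.
wlog ab : a b / b <= a.
  move=> H a0 b0; case: (leP b a) => [ba|/ltW ab]; first exact: H.
  by rewrite distrC (distrC a); apply: H.
move=> a0 b0.
have sb := sqrtr_ge0 b; have sab := sqrtr_ge0 `|a - b|.
have h1 : Num.sqrt b <= Num.sqrt a by rewrite ler_sqrt.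
rewrite ger0_norm ?subr_ge0 // lerBlDl.
rewrite -(@ler_pXn2r _ 2) ?nnegrE ?addr_ge0 ?sqrtr_ge0 //.
rewrite sqr_sqrtr // sqrrD !sqr_sqrtr ?normr_ge0 //.
have : 0 <= Num.sqrt b * Num.sqrt `|a - b| *+ 2 by rewrite mulrn_wge0 // mulr_ge0 // sqrtr_ge0.
move: (Num.sqrt b * Num.sqrt `|a - b| *+ 2) => t.
by rewrite ger0_norm ?subr_ge0 //; lra.
Qed.

Lemma pm_norm (C : numDomainType) (c z : C) : 0 <= c + z -> 0 <= c - z -> `|z| <= c.
Proof.
move=> h1 h2.
have c0 : 0 <= c.
  have : 0 <= (c + z) + (c - z) by rewrite addr_ge0.
  by rewrite addrACA subrr addr0 -mulr2n pmulrn_lge0.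
have zr : z \is Num.real.
  have -> : z = (c + z) - c by rewrite addrAC subrr add0r.
  by rewrite rpredB ?ger0_real.
rewrite real_ler_norml //; apply/andP; split; first by rewrite -subr_ge0 opprK addrC.
by rewrite -subr_ge0.
Qed.

Section CX.
Variables (R : realType) (X : Type) (d : X -> X -> R) (A : falgType R[i])
  (star : A -> A) (cn : A -> R).
Hypothesis Hd : is_metric d.
Hypothesis HC : is_cstar star cn.

Definition nc (z : R[i]) : R := complex.Re `|z|.
Lemma nc_ge0 z : 0 <= nc z.
Proof. by rewrite /nc normc_def /= sqrtr_ge0. Qed.
Lemma ncE z : `|z| = (nc z)%:C%C.
Proof. by rewrite /nc normc_def. Qed.
Lemma nc_real (r : R) : nc r%:C%C = `|r|.
Proof. by rewrite /nc normc_real. Qed.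

Lemma cnZ z a : cn (z *: a) = nc z * cn a.
Proof. by apply: complexI; rewrite (cn_scale HC) ncE rmorphM. Qed.

Lemma cn_rn : is_real_norm cn.
Proof.
split; [exact: (cn_eq0 HC) | exact: (cn_triangle HC) |].
by move=> r a; rewrite cnZ nc_real.
Qed.

Lemma star0 : star 0 = 0.
Proof. by have := star_add HC 0 0; rewrite addr0 => /(congr1 (fun v => v - star 0)); rewrite subrr addrK. Qed.
Lemma starN a : star (- a) = - star a.
Proof. by apply/eqP; rewrite -subr_eq0 opprK -(star_add HC) addNr star0. Qed.
Lemma starB a b : star (a - b) = star a - star b.
Proof. by rewrite (star_add HC) starN. Qed.
Lemma star1 : star 1 = 1.
Proof.
have h := star_mul HC (star 1) 1.
by rewrite mulr1 !(star_invol HC) mulr1 in h; rewrite -h.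
Qed.
Lemma starZr (r : R) a : star (r%:C%C *: a) = r%:C%C *: star a.
Proof. by rewrite (star_scale HC) conjc_real. Qed.

Lemma cn1_gt0 : 0 < cn 1.
Proof.
rewrite lt0r (rn_ge0 cn_rn) andbT; apply/eqP => /(cn_eq0 HC) /eqP.
by rewrite oner_eq0.
Qed.

Definition hcont (h : X -> X -> R) :=
  forall x (eps : R), 0 < eps -> exists2 del : R, 0 < del & forall y, d x y < del -> h x y < eps.

Lemma cont_le (b : X -> A) (h : X -> X -> R) (K : R) : 0 <= K -> hcont h ->
  (forall x y, cn (b y - b x) <= K * h x y) -> cont_XA d cn b.
Proof.
move=> K0 hh hb x eps e0.
have e1 : 0 < eps / (K + 1) by rewrite divr_gt0 // ltr_wpDl.
have [del del0 hdel] := hh x _ e1; exists del => // y /hdel hy.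
have := @lip_arith R K eps (cn (b y - b x)) (h x y) K0 e0.
by rewrite ger0_norm ?(rn_ge0 cn_rn) //; apply => //; exact: hb.
Qed.

Lemma hcontD h1 h2 : hcont h1 -> hcont h2 -> hcont (fun x y => h1 x y + h2 x y).
Proof.
move=> c1 c2 x eps e0.
have e2 : 0 < eps / 2%:R by rewrite divr_gt0.
have [d1 d10 hd1] := c1 x _ e2; have [d2 d20 hd2] := c2 x _ e2.
exists (Num.min d1 d2); first by rewrite lt_min d10 d20.
move=> y; rewrite lt_min => /andP [/hd1 a1 /hd2 a2].
have : eps = eps / 2%:R + eps / 2%:R by rewrite -splitr.
lra.
Qed.

Lemma hcont_cont a : cont_XA d cn a -> hcont (fun x y => cn (a y - a x)).
Proof. by []. Qed.

Lemma hcont_contR f : cont_XR d f -> hcont (fun x y => `|f y - f x|).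
Proof. by []. Qed.

Lemma contC a0 : cont_XA d cn (fun _ => a0).
Proof. by move=> x eps e0; exists 1 => // y _; rewrite subrr (rn0 cn_rn). Qed.

Lemma contD a b : cont_XA d cn a -> cont_XA d cn b -> cont_XA d cn (fun x => a x + b x).
Proof.
move=> ca cb; apply: (@cont_le (fun x => a x + b x) (fun x y => cn (a y - a x) + cn (b y - b x)) 1) => //.
  exact: hcontD.
move=> x y; rewrite mul1r opprD addrACA; exact: (cn_triangle HC).
Qed.

Lemma contZ z a : cont_XA d cn a -> cont_XA d cn (fun x => z *: a x).
Proof.
move=> ca; apply: (@cont_le (fun x => z *: a x) (fun x y => cn (a y - a x)) (nc z) (nc_ge0 z)) => //.
by move=> x y; rewrite -scalerBr cnZ.
Qed.

Lemma contB a b : cont_XA d cn a -> cont_XA d cn b -> cont_XA d cn (fun x => a x - b x).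
Proof.
move=> ca cb; suff -> : (fun x => a x - b x) = (fun x => a x + (-1) *: b x).
  exact: contD ca (contZ (-1) cb).
by apply: funext => x; rewrite scaleN1r.
Qed.

Lemma contR f e : cont_XR d f -> cont_XA d cn (fun x => (f x)%:C%C *: e).
Proof.
move=> cf; apply: (@cont_le (fun x => (f x)%:C%C *: e) (fun x y => `|f y - f x|) (cn e) (rn_ge0 cn_rn e)) => //.
by move=> x y; rewrite -scalerBl -rmorphB cnZ nc_real mulrC.
Qed.

Lemma cont_sum (I : Type) (s : seq I) (F : I -> X -> A) :
  (forall i, cont_XA d cn (F i)) -> cont_XA d cn (fun x => \sum_(i <- s) F i x).
Proof.
move=> cF; elim: s => [|i s IH].
  suff -> : (fun x => \sum_(i <- [::]) F i x) = (fun=> 0) by exact: contC.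
  by apply: funext => x; rewrite big_nil.
suff -> : (fun x => \sum_(j <- i :: s) F j x) = (fun x => F i x + \sum_(j <- s) F j x).
  exact: contD (cF i) IH.
by apply: funext => x; rewrite big_cons.
Qed.

Hypothesis Hc : d_compact d.

Lemma cont_bounded a : cont_XA d cn a -> exists M : R, forall x, cn (a x) <= M.
Proof.
move=> ca; apply: (usc_bounded Hc) => x k hk.
have hk' : 0 < k - cn (a x) by rewrite subr_gt0.
have [del del0 hdel] := ca x _ hk'.
exists del => // y /hdel h.
have := cn_triangle HC (a y - a x) (a x); rewrite subrK; lra.
Qed.
End CX.

End M_P4.
Import M_P4.

Module M_P5.
Lemma zid (V : ringType) (h : V) : (h + 1) * (h + 1) - (h - 1) * (h - 1) = h *+ 4.
Proof.
rewrite !mulrDl !mulrDr !mul1r !mulr1 !mulNr !mulrN !mul1r opprK.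
move: (h * h) => y.
rewrite !opprD !opprK !addrA mulr1.
rewrite (addrAC _ 1 (- y)) (addrAC _ h (- y)) (addrAC y h (- y)) subrr add0r.
rewrite (addrAC _ h (- 1)) (addrAC _ h (- 1)) addrK.
by rewrite !mulrS mulr0n addr0 !addrA.
Qed.

Section State.
Variables (R : realType) (X : Type) (d : X -> X -> R) (A : falgType R[i])
  (star : A -> A) (cn : A -> R) (mu : (X -> A) -> R[i]).
Hypothesis Hd : is_metric d.
Hypothesis HC : is_cstar star cn.
Hypothesis Hmu : is_state d star cn mu.
Local Notation cont := (cont_XA d cn).

Lemma mu_ext f g : (forall x, f x = g x) -> mu f = mu g.
Proof. by move=> h; congr mu; apply: funext. Qed.

Lemma mu_addE a b : cont a -> cont b -> mu (fun x => a x + b x) = mu a + mu b.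
Proof. by case: Hmu => h _ _ _; apply: h. Qed.
Lemma mu_scaleE z a : cont a -> mu (fun x => z *: a x) = z * mu a.
Proof. by case: Hmu => _ h _ _; apply: h. Qed.
Lemma mu_posE a : cont a -> 0 <= mu (fun x => star (a x) * a x).
Proof. by case: Hmu => _ _ h _; apply: h. Qed.
Lemma mu_one : mu (fun _ => 1) = 1.
Proof. by case: Hmu. Qed.

Lemma mu_cst z : mu (fun _ => z *: 1) = z.
Proof. by rewrite (mu_scaleE z (contC d HC 1)) mu_one mulr1. Qed.

Lemma mu0 : mu (fun _ => 0) = 0.
Proof. by rewrite -(mu_cst 0); apply: mu_ext => x; rewrite scale0r. Qed.

Lemma mu_subE a b : cont a -> cont b -> mu (fun x => a x - b x) = mu a - mu b.
Proof.
move=> ca cb; rewrite -mulN1r -(mu_scaleE (-1) cb) -(mu_addE ca (contZ HC (-1) cb)).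
by apply: mu_ext => x; rewrite scaleN1r.
Qed.

Lemma mu_sumE (I : Type) (s : seq I) (F : I -> X -> A) : (forall i, cont (F i)) ->
  mu (fun x => \sum_(i <- s) F i x) = \sum_(i <- s) mu (F i).
Proof.
move=> cF; elim: s => [|i s IH].
  by rewrite big_nil -mu0; apply: mu_ext => x; rewrite big_nil.
rewrite big_cons -IH -(mu_addE (cF i)); last exact: (cont_sum HC).
by apply: mu_ext => x; rewrite big_cons.
Qed.

Lemma sqrt_cont (f : X -> R) : (forall x, 0 <= f x) -> cont_XR d f ->
  cont_XR d (fun x => Num.sqrt (f x)).
Proof.
move=> f0 cf x eps e0.
have [del del0 hdel] := cf x _ (mulr_gt0 e0 e0).
exists del => // y /hdel h.
apply: le_lt_trans (sqrt_diff (f0 y) (f0 x)) _.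
have -> : eps = Num.sqrt (eps * eps) by rewrite -expr2 sqrtr_sqr ger0_norm // ltW.
by rewrite ltr_sqrt ?mulr_gt0.
Qed.

Lemma mu_pbound w (f : X -> R) M : cont_XR d f -> (forall x, `|f x| <= M) ->
  `|mu (fun x => (f x)%:C%C *: (star w * w))| <= M%:C%C * mu (fun _ => star w * w).
Proof.
move=> cf fM; set P := star w * w.
have cP : cont (fun x => (f x)%:C%C *: P) := contR HC P cf.
have key : forall s : R, `|s| = 1 ->
    0 <= M%:C%C * mu (fun _ => P) + s%:C%C * mu (fun x => (f x)%:C%C *: P).
  move=> s s1.
  have g0 : forall x, 0 <= M + s * f x.
    move=> x; have := fM x; have : `|s * f x| = `|f x| by rewrite normrM s1 mul1r.
    move=> <- h; have := ler_norm (- (s * f x)); rewrite normrN; lra.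
  have cg : cont_XR d (fun x => Num.sqrt (M + s * f x)).
    apply: sqrt_cont => // x eps e0; have [del del0 hdel] := cf x eps e0.
    exists del => // y /hdel h.
    by rewrite opprD addrACA subrr add0r -mulrBr normrM s1 mul1r.
  have cW : cont (fun x => (Num.sqrt (M + s * f x))%:C%C *: w) := contR HC w cg.
  have := mu_posE cW.
  have -> : mu (fun x => star ((Num.sqrt (M + s * f x))%:C%C *: w) *
                        ((Num.sqrt (M + s * f x))%:C%C *: w)) =
            mu (fun x => M%:C%C *: P + s%:C%C *: ((f x)%:C%C *: P)).
    apply: mu_ext => x.
    set g := Num.sqrt (M + s * f x).
    have -> : star (g%:C%C *: w) * (g%:C%C *: w) = (g * g)%:C%C *: P.
      by rewrite (starZr HC) -scalerAl -scalerAr scalerA rmorphM.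
    by rewrite -expr2 sqr_sqrtr // rmorphD rmorphM scalerDl scalerA.
  rewrite (mu_addE (contC d HC _) (contZ HC _ cP)).
  by rewrite (mu_scaleE _ cP) -(mu_scaleE _ (contC d HC P)).
apply: pm_norm.
  by have := key 1 (normr1 _); rewrite rmorph1 mul1r.
have h1 : `|(-1 : R)| = 1 by rewrite normrN normr1.
by have := key (-1) h1; rewrite rmorphN1 mulN1r.
Qed.

Lemma ge0_C (z : R[i]) : 0 <= z -> exists2 c : R, 0 <= c & z = c%:C%C.
Proof.
move=> z0; exists (complex.Re z); last by rewrite RRe_real // ger0_real.
by rewrite -lecR RRe_real // ger0_real.
Qed.

Lemma mu_sa (h : A) : star h = h -> exists2 c : R, 0 <= c &
  forall f M, cont_XR d f -> (forall x, `|f x| <= M) ->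
    `|mu (fun x => (f x)%:C%C *: h)| <= (M * c)%:C%C.
Proof.
move=> sh.
have shp : star (h + 1) = h + 1 by rewrite (star_add HC) sh (star1 HC).
have shm : star (h - 1) = h - 1 by rewrite (starB HC) sh (star1 HC).
have [cp cp0 ecp] := ge0_C (mu_posE (contC d HC (h + 1))).
have [cm cm0 ecm] := ge0_C (mu_posE (contC d HC (h - 1))).
set a : R := (4%:R)^-1.
have a0 : 0 <= a by rewrite /a invr_ge0.
exists ((cp + cm) * a); first by rewrite mulr_ge0 // addr_ge0.
move=> f M cf fM.
have c1 : cont (fun x => (f x)%:C%C *: (star (h + 1) * (h + 1))) := contR HC _ cf.
have c2 : cont (fun x => (f x)%:C%C *: (star (h - 1) * (h - 1))) := contR HC _ cf.
have -> : mu (fun x => (f x)%:C%C *: h) =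
    a%:C%C * mu (fun x => (f x)%:C%C *: (star (h + 1) * (h + 1))) -
    a%:C%C * mu (fun x => (f x)%:C%C *: (star (h - 1) * (h - 1))).
  rewrite -!(mu_scaleE _ c1) -!(mu_scaleE _ c2) -mu_subE; try exact: (contZ HC).
  apply: mu_ext => x; rewrite -!scalerBr shp shm zid scalerA -scaler_nat scalerA.
  congr (_ *: _).
  by rewrite mulrAC -(rmorph_nat (real_complex R) 4) -rmorphM /a mulVf ?pnatr_eq0 // rmorph1 mul1r.
apply: le_trans (ler_normB _ _) _.
rewrite !normrM !normc_real (ger0_norm a0).
have b1 := mu_pbound (h + 1) cf fM; have b2 := mu_pbound (h - 1) cf fM.
have ecp' : mu (fun _ => star (h + 1) * (h + 1)) = cp%:C%C := ecp.
have ecm' : mu (fun _ => star (h - 1) * (h - 1)) = cm%:C%C := ecm.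
rewrite ecp' in b1; rewrite ecm' in b2.
rewrite -!rmorphM in b1 b2.
have a0' : 0 <= a%:C%C by rewrite ler0c.
have b1' := ler_wpM2l a0' b1; have b2' := ler_wpM2l a0' b2.
apply: le_trans (lerD b1' b2') _.
by rewrite -!rmorphM -rmorphD lecR le_eqVlt; apply/orP; left; apply/eqP; ring.
Qed.

Lemma conj_i : conjc ('i%C : R[i]) = - 'i%C.
Proof. by apply/eqP; rewrite eq_complex /= oppr0 !eqxx. Qed.

Lemma mu_e (e : A) : exists2 c : R, 0 <= c &
  forall f M, cont_XR d f -> (forall x, `|f x| <= M) ->
    `|mu (fun x => (f x)%:C%C *: e)| <= (M * c)%:C%C.
Proof.
set t : R := 2%:R^-1.
set h := t%:C%C *: (e + star e).
set k := t%:C%C *: ('i%C *: (star e - e)).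
have sh : star h = h by rewrite /h (starZr HC) (star_add HC) (star_invol HC) addrC.
have sk : star k = k.
  rewrite /k (starZr HC) (star_scale HC) conj_i (starB HC) (star_invol HC).
  by rewrite scaleNr -scalerN opprB.
have ehk : e = h + 'i%C *: k.
  rewrite /h /k !scalerA.
  have -> : 'i%C * t%:C%C * 'i%C = - t%:C%C by rewrite mulrAC -expr2 sqr_i mulN1r.
  rewrite scaleNr -scalerN opprB.
  rewrite -scalerDr addrACA subrr addr0 -mulr2n -scaler_nat scalerA.
  by rewrite -(rmorph_nat (real_complex R) 2) -rmorphM /t mulVf ?pnatr_eq0 // rmorph1 scale1r.
have [ch ch0 hh] := mu_sa sh; have [ck ck0 hk] := mu_sa sk.
exists (ch + ck); first by rewrite addr_ge0.
move=> f M cf fM.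
have c1 : cont (fun x => (f x)%:C%C *: h) := contR HC _ cf.
have c2 : cont (fun x => (f x)%:C%C *: k) := contR HC _ cf.
have -> : mu (fun x => (f x)%:C%C *: e) =
    mu (fun x => (f x)%:C%C *: h) + 'i%C * mu (fun x => (f x)%:C%C *: k).
  rewrite -(mu_scaleE _ c2) -(mu_addE c1 (contZ HC _ c2)).
  apply: mu_ext => x; rewrite {1}ehk scalerDr; congr (_ + _).
  by rewrite !scalerA (mulrC (f x)%:C%C).
apply: le_trans (ler_normD _ _) _.
rewrite normrM.
have -> : `|'i%C : R[i]| = 1 by rewrite normc_def /= expr0n expr1n add0r sqrtr1.
by rewrite mul1r mulrDr rmorphD lerD // ?hh ?hk.
Qed.

Lemma X_inh : exists x : X, True.
Proof.
case: (pselect (exists x : X, True)) => // nx; exfalso; have := mu_one.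
have -> : (fun _ : X => (1 : A)) = (fun _ => 0).
  by apply: funext => x; exfalso; apply: nx; exists x.
rewrite mu0 => /eqP; rewrite eq_sym oner_eq0 //.
Qed.

Lemma mu_bound : exists2 K : R, 0 < K & forall g t, cont g ->
  (forall x, cn (g x) <= t) -> `|mu g| <= (K * t)%:C%C.
Proof.
have [k k0 hk] := NE_rco (cn_rn HC).
have [cf hcf] : exists cf : A -> R, forall e, (0 <= cf e) /\
    (forall f M, cont_XR d f -> (forall x, `|f x| <= M) ->
      `|mu (fun x => (f x)%:C%C *: e)| <= (M * cf e)%:C%C).
  have hx : forall e : A, exists c : R, (0 <= c) /\ (forall f M, cont_XR d f ->
      (forall x, `|f x| <= M) -> `|mu (fun x => (f x)%:C%C *: e)| <= (M * c)%:C%C).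
    by move=> e; have [c c0 hc] := mu_e e; exists c.
  by have [f hf] := choice hx; exists f.
set S := \sum_j cf (fb j).
have S0 : 0 <= S by apply: sumr_ge0 => j _; case: (hcf (fb j)).
exists (k * S + 1); first by rewrite ltr_wpDl // mulr_ge0 // ltW.
move=> g t cg gt.
have [x0 _] := X_inh.
have t0 : 0 <= t by apply: le_trans (gt x0); apply: (rn_ge0 (cn_rn HC)).
have cr : forall j, cont_XR d (fun x => rco (g x) 0 j).
  move=> j x eps e0; have [del del0 hdel] := cg x _ (divr_gt0 e0 k0).
  exists del => // y /hdel h.
  have -> : rco (g y) 0 j - rco (g x) 0 j = rco (g y - g x) 0 j by rewrite rcoB !mxE.
  apply: le_lt_trans (hk _ _) _.
  by rewrite -ltr_pdivlMl // mulrC.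
have -> : mu g = mu (fun x => \sum_j (rco (g x) 0 j)%:C%C *: fb j).
  by apply: mu_ext => x; rewrite -[LHS]psi_rco.
rewrite mu_sumE; last by move=> j; exact: (contR HC _ (cr j)).
apply: le_trans (ler_norm_sum _ _ _) _.
apply: (@le_trans _ _ (\sum_j ((k * t) * cf (fb j))%:C%C)).
  apply: ler_sum => j _; case: (hcf (fb j)) => _ H; apply: H; first exact: cr.
  move=> x; apply: le_trans (hk _ _) _; apply: ler_wpM2l; [exact: ltW | exact: gt].
rewrite -rmorph_sum lecR -mulr_sumr mulrDl mul1r mulrAC.
by rewrite lerDl.
Qed.
End State.

End M_P5.
Import M_P5.

Module M_P6.
Local Open Scope classical_set_scope.
Section Ereal.
Variable R : realType.

Lemma le_scale_reals (x y : \bar R) (K : R) : 0 < K -> (0 <= y)%E ->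
  (forall t : R, (y < t%:E)%E -> (x <= (K * t)%:E)%E) -> (x <= K%:E * y)%E.
Proof.
move=> K0 y0 h; case: y y0 h => [r| |] //= y0 h.
- rewrite -EFinM.
  have hx : (x <= (K * (r + 1))%:E)%E by apply: h; rewrite lte_fin ltrDl.
  case: x hx h => [s hx h| //|]; last by move=> *; apply: leNye.
  rewrite lee_fin; apply/ler_addgt0Pr => e e0.
  have := h (r + e / K); rewrite lte_fin ltrDl divr_gt0 // lee_fin => /(_ isT).
  by rewrite mulrDr mulrCA mulfV ?gt_eqF // mulr1.
- by rewrite mulry gtr0_sg // mul1e leey.
Qed.

Lemma le_inv_scale (x y : \bar R) (K : R) : 0 < K -> (x <= K%:E * y)%E ->
  ((K^-1)%:E * x <= y)%E.
Proof. by move=> K0; rewrite lee_pdivrMl. Qed.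

Lemma sup0_le (S : set \bar R) (t : R) : 0 <= t -> (forall z, S z -> (z <= t%:E)%E) ->
  (ereal_sup ([set 0%E] `|` S) <= t%:E)%E.
Proof.
move=> t0 h; apply/ereal_supP => z [->|/h //]; by rewrite lee_fin.
Qed.

Lemma sup0_lt (S : set \bar R) (t : \bar R) z : (ereal_sup ([set 0%E] `|` S) < t)%E ->
  S z -> (z < t)%E.
Proof. by move=> h Sz; apply: le_lt_trans h; apply: ereal_sup_ubound; right. Qed.

Lemma sup0_ge0 (S : set \bar R) : (0 <= ereal_sup ([set 0%E] `|` S))%E.
Proof. by apply: ereal_sup_ubound; left. Qed.
End Ereal.

End M_P6.
Import M_P6.

Module M_P7.
Local Open Scope classical_set_scope.
Section Main.
Variables (R : realType) (X : Type) (d : X -> X -> R) (A : falgType R[i])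
  (star : A -> A) (cn : A -> R) (mu : (X -> A) -> R[i]).
Hypothesis Hd : is_metric d.
Hypothesis Hc : d_compact d.
Hypothesis HC : is_cstar star cn.
Hypothesis Hmu : is_state d star cn mu.
Local Notation cont := (cont_XA d cn).

Lemma lipA_lt (N : A -> R) (HN : is_real_norm N) a (t : R) : (lipA d N a < t%:E)%E ->
  forall x y, N (a x - a y) <= t * d x y.
Proof.
move=> h x y; case: (pselect (x = y)) => [->|xy].
  by rewrite subrr (rn0 HN) (dxx Hd) mulr0.
have := sup0_lt h (z := (N (a x - a y) / d x y)%:E); rewrite lte_fin.
by rewrite ltr_pdivrMr ?(d_pos Hd xy) // => /(_ _)/ltW; apply; exists (x, y).
Qed.

Lemma lipA_le (N : A -> R) (HN : is_real_norm N) a (t : R) : 0 <= t ->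
  (forall x y, N (a x - a y) <= t * d x y) -> (lipA d N a <= t%:E)%E.
Proof.
move=> t0 h; apply: sup0_le => // z [[x y] /= xy <-].
by rewrite lee_fin ler_pdivrMr ?(d_pos Hd xy) //; exact: h.
Qed.

Lemma lipR_lt (f : X -> R) (t : R) : (lipR d f < t%:E)%E ->
  forall x y, `|f x - f y| <= t * d x y.
Proof.
move=> h x y; case: (pselect (x = y)) => [->|xy].
  by rewrite subrr normr0 (dxx Hd) mulr0.
have := sup0_lt h (z := (`|f x - f y| / d x y)%:E); rewrite lte_fin.
by rewrite ltr_pdivrMr ?(d_pos Hd xy) // => /(_ _)/ltW; apply; exists (x, y).
Qed.

Lemma lipR_le (f : X -> R) (t : R) : 0 <= t ->
  (forall x y, `|f x - f y| <= t * d x y) -> (lipR d f <= t%:E)%E.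
Proof.
move=> t0 h; apply: sup0_le => // z [[x y] /= xy <-].
by rewrite lee_fin ler_pdivrMr ?(d_pos Hd xy) //; exact: h.
Qed.

Lemma supnorm_lt (a : X -> A) (t : R) : (supnorm cn a < t%:E)%E -> forall x, cn (a x) <= t.
Proof.
move=> h x; have := sup0_lt h (z := (cn (a x))%:E); rewrite lte_fin.
by move=> /(_ _)/ltW; apply; exists x.
Qed.

Lemma supnorm_le (a : X -> A) (t : R) : 0 <= t -> (forall x, cn (a x) <= t) ->
  (supnorm cn a <= t%:E)%E.
Proof. by move=> t0 h; apply: sup0_le => // z [x _ <-]; rewrite lee_fin. Qed.

Lemma Lq_ge0 (N : A -> R) q (a : X -> A) : (0 <= Lq d cn N mu q a)%E.
Proof. by rewrite /Lq le_max sup0_ge0. Qed.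

Lemma lipR_ge0 (f : X -> R) : (0 <= lipR d f)%E.
Proof. exact: sup0_ge0. Qed.

Definition Pc (a : X -> A) (l s : R) :=
  (forall x y, cn (a x - a y) <= l * d x y) /\
  exists lam : R[i], forall x, cn (a x - lam *: 1) <= s.

Lemma Pc_mono a l s l' s' : Pc a l s -> l <= l' -> s <= s' -> Pc a l' s'.
Proof.
move=> [h1 [lam h2]] ll ss; split.
  move=> x y; apply: le_trans (h1 x y) _; apply: ler_wpM2r => //; exact: (d_ge0 Hd).
by exists lam => x; apply: le_trans (h2 x) ss.
Qed.

Lemma alpha (N : A -> R) q : is_real_norm N -> exists2 K : R, 0 < K &
  forall a, cont a -> forall t : R, (Lq d cn N mu q a < t%:E)%E -> Pc a (K * t) (K * t).
Proof.
move=> HN.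
have [kN kN0 hkN] := NE_equiv (cn_rn HC) HN.
have [D D0 hD] := diam_bound Hd Hc.
have [x0 _] := X_inh HC Hmu.
exists (kN * (D + 1) + 1); first by nra.
move=> a ca t; rewrite /Lq gt_max => /andP [hl hdev].
have t0 : 0 < t.
  by rewrite -lte_fin; apply: le_lt_trans hl; apply: sup0_ge0.
have hl' := lipA_lt HN hl.
have lcn : forall x y, cn (a x - a y) <= (kN * t) * d x y.
  move=> x y; apply: le_trans (hkN _) _; rewrite -mulrA; apply: ler_wpM2l; first exact: ltW.
  exact: hl'.
have kDt : 0 <= kN * D * t by rewrite !mulr_ge0 // ltW.
have kt : 0 <= kN * t by rewrite mulr_ge0 // ltW.
have Kt1 : kN * t <= (kN * (D + 1) + 1) * t by nra.
have Kt2 : kN * t * D + t <= (kN * (D + 1) + 1) * t by nra.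
have Kt3 : t <= (kN * (D + 1) + 1) * t by nra.
split.
  move=> x y; apply: le_trans (lcn x y) _; apply: ler_wpM2r => //; exact: (d_ge0 Hd).
case: q hdev => /= hdev.
- have [z' [b sb <-] hz] := ereal_inf_lt hdev.
  have hs := supnorm_lt hz.
  have [lam hlam] := sb.2 x0.
  exists lam => x; apply: le_trans Kt2.
  have -> : a x - lam *: 1 = (a x - a x0) + (a x0 - b x0) by rewrite hlam addrA subrK.
  apply: le_trans (cn_triangle HC _ _) _; apply: lerD; last exact: hs.
  apply: le_trans (lcn x x0) _; apply: ler_wpM2l; [by rewrite mulr_ge0 ?ltW | exact: hD].
- have [z' [lam _ <-] hz] := ereal_inf_lt hdev.
  by exists lam => x; apply: le_trans Kt3; apply: (supnorm_lt hz).
- by exists (mu a) => x; apply: le_trans Kt3; apply: (supnorm_lt hdev).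
Qed.

Lemma beta (N : A -> R) q : is_real_norm N -> exists2 K : R, 0 < K &
  forall a, cont a -> forall t : R, 0 <= t -> Pc a t t -> (Lq d cn N mu q a <= (K * t)%:E)%E.
Proof.
move=> HN.
have [kN kN0 hkN] := NE_equiv HN (cn_rn HC).
have [Km Km0 hKm] := mu_bound HC Hmu.
have c10 := cn1_gt0 HC.
set K := kN + 1 + Km * cn 1.
have Kmc : 0 <= Km * cn 1 by rewrite mulr_ge0 // ltW.
have K1 : 1 <= K by rewrite /K; lra.
have h2 : kN <= K by rewrite /K; lra.
exists K; first by apply: lt_le_trans K1.
move=> a ca t t0 [hl [lam hlam]].
have Kt3 : t <= K * t by rewrite ler_peMl.
rewrite /Lq ge_max; apply/andP; split.
  apply: (lipA_le HN); first by rewrite mulr_ge0 // (le_trans ler01 K1).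
  move=> x y; apply: le_trans (hkN _) _.
  have h1 := hl x y; have dd := d_ge0 Hd x y.
  have td : 0 <= t * d x y by rewrite mulr_ge0.
  have c0 := rn_ge0 (cn_rn HC) (a x - a y).
  nra.
case: q => /=.
- apply: le_trans (ereal_inf_lbound _) _.
    exists (fun _ => lam *: 1) => //; split; first exact: (contC d HC).
    by move=> x; exists lam.
  apply: supnorm_le; first by rewrite mulr_ge0 // (le_trans ler01 K1).
  by move=> x; apply: le_trans Kt3.
- apply: le_trans (ereal_inf_lbound _) _; first by exists lam.
  apply: supnorm_le; first by rewrite mulr_ge0 // (le_trans ler01 K1).
  by move=> x; apply: le_trans Kt3.
- apply: supnorm_le; first by rewrite mulr_ge0 // (le_trans ler01 K1).
  move=> x.
  have cl : cont (fun x => a x - lam *: 1) := contB HC ca (contC d HC _).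
  have hm : nc (lam - mu a) <= Km * t.
    have := hKm _ t cl hlam.
    rewrite (mu_subE HC Hmu ca (contC d HC _)) (mu_cst HC Hmu) ncE lecR.
    by rewrite /nc distrC.
  have -> : a x - mu a *: 1 = (a x - lam *: 1) + (lam - mu a) *: 1.
    by rewrite scalerBl addrA subrK.
  apply: le_trans (cn_triangle HC _ _) _; rewrite (cnZ HC).
  have h1 := hlam x; have n0 := nc_ge0 (lam - mu a).
  have : nc (lam - mu a) * cn 1 <= Km * t * cn 1 by apply: ler_wpM2r => //; exact: ltW.
  rewrite /K; nra.
Qed.

Lemma compare (N1 N2 : A -> R) q1 q2 : is_real_norm N1 -> is_real_norm N2 ->
  exists2 K : R, 0 < K & forall a, cont a ->
    (Lq d cn N2 mu q2 a <= K%:E * Lq d cn N1 mu q1 a)%E.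
Proof.
move=> H1 H2; have [Ka Ka0 ha] := alpha q1 H1; have [Kb Kb0 hb] := beta q2 H2.
exists (Kb * Ka); first by rewrite mulr_gt0.
move=> a ca; apply: le_scale_reals; [by rewrite mulr_gt0 | exact: Lq_ge0 |].
move=> t ht.
have t0 : 0 < t by rewrite -lte_fin; apply: le_lt_trans ht; exact: Lq_ge0.
rewrite -mulrA; apply: hb => //; first by rewrite mulr_ge0 // ltW.
exact: ha.
Qed.

Lemma cX_upper (N : A -> R) q : is_real_norm N -> exists2 K : R, 0 < K &
  forall f, cont_XR d f -> (Lq d cn N mu q (cX A f) <= K%:E * lipR d f)%E.
Proof.
move=> HN; have [Kb Kb0 hb] := beta q HN.
have [D D0 hD] := diam_bound Hd Hc.
have [x0 _] := X_inh HC Hmu.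
have c10 := cn1_gt0 HC.
set K0 := cn 1 * (D + 1).
have K00 : 0 < K0 by rewrite mulr_gt0 // ltr_wpDl.
exists (Kb * K0); first by rewrite mulr_gt0.
move=> f cf; apply: le_scale_reals; [by rewrite mulr_gt0 | exact: lipR_ge0 |].
move=> t ht.
have t0 : 0 < t by rewrite -lte_fin; apply: le_lt_trans ht; exact: lipR_ge0.
have hf := lipR_lt ht.
rewrite -mulrA; apply: hb; first exact: (contR HC 1 cf).
  by rewrite mulr_ge0 // ltW.
have cXE : forall x y, cX A f x - cX A f y = (f x - f y)%:C%C *: 1.
  by move=> x y; rewrite /cX -scalerBl -rmorphB.
apply: (@Pc_mono _ (cn 1 * t) (cn 1 * (t * D))).
- split.
    move=> x y; rewrite cXE (cnZ HC) nc_real mulrC -mulrA; apply: ler_wpM2l; first exact: ltW.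
    exact: hf.
  exists (f x0)%:C%C => x; rewrite /cX -scalerBl -rmorphB (cnZ HC) nc_real mulrC; apply: ler_wpM2l; first exact: ltW.
  apply: le_trans (hf x x0) _; apply: ler_wpM2l; [exact: ltW | exact: hD].
- rewrite /K0 -mulrA; apply: ler_wpM2l; first exact: ltW.
  have := hD x0 x0; nra.
- rewrite /K0 -mulrA; apply: ler_wpM2l; first exact: ltW.
  nra.
Qed.

Lemma cX_lower (N : A -> R) q : is_real_norm N -> exists2 c : R, 0 < c &
  forall f, cont_XR d f -> (c%:E * lipR d f <= Lq d cn N mu q (cX A f))%E.
Proof.
move=> HN.
have N10 : 0 < N 1.
  rewrite lt0r (rn_ge0 HN) andbT; apply/eqP => /(rnorm_eq0 HN) /eqP.
  by rewrite oner_eq0.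
exists (N 1) => // f cf.
rewrite -[N 1]invrK; apply: le_inv_scale; first by rewrite invr_gt0.
apply: le_scale_reals; [by rewrite invr_gt0 | exact: Lq_ge0 |].
move=> t; rewrite /Lq gt_max => /andP [hl _].
have t0 : 0 < t by rewrite -lte_fin; apply: le_lt_trans hl; apply: sup0_ge0.
have hl' := lipA_lt HN hl.
apply: lipR_le; first by rewrite mulr_ge0 // ltW // invr_gt0.
move=> x y; have := hl' x y; rewrite /cX -scalerBl -rmorphB (rnZ HN).
by rewrite -mulrA ler_pdivlMl // mulrC.
Qed.
End Main.

End M_P7.
Import M_P7.

Theorem proposition2p15 (R : realType) (X : Type) (d : X -> X -> R)
  (A : falgType R[i]) (star : A -> A) (cn : A -> R)
  (mu : (X -> A) -> R[i]) (Nn Nm : A -> R) (q p : qchoice) :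
  compact_metric_space d ->
  is_cstar star cn ->
  is_state d star cn mu ->
  is_real_norm Nn -> is_real_norm Nm ->
  (exists c Cc : R, [/\ 0 < c, 0 < Cc &
     forall a : X -> A, self_adjoint_XA d star cn a ->
       (c%:E * Lq d cn Nn mu q a <= Lq d cn Nm mu p a)%E /\
       (Lq d cn Nm mu p a <= Cc%:E * Lq d cn Nn mu q a)%E]) /\
  (exists c' C' : R, [/\ 0 < c', 0 < C' &
     forall f : X -> R, cont_XR d f ->
       (c'%:E * lipR d f <= Lq d cn Nn mu q (cX A f))%E /\
       (Lq d cn Nn mu q (cX A f) <= C'%:E * lipR d f)%E]).
Proof.
move=> [Hd Hc] HC Hmu Hn Hm; split.
  have [K1 K10 h1] := compare Hd Hc HC Hmu q p Hn Hm.
  have [K2 K20 h2] := compare Hd Hc HC Hmu p q Hm Hn.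
  exists K2^-1, K1; split; [by rewrite invr_gt0 | by [] |].
  move=> a [ca _]; split; last exact: h1.
  by apply: le_inv_scale => //; exact: h2.
have [c c0 hc] := cX_lower cn mu Hd q Hn.
have [C C0 hC] := cX_upper Hd Hc HC Hmu q Hn.
by exists c, C; split => // f cf; split; [exact: hc | exact: hC].
Qed.
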